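(* Let $\Phi\in\Lambda$, let $n<N$, and let $\Xi$ be the set of designs $\{(\boldsymbol{x}_i,w_i)\}$ with $0\le w_i\le1/n$ and $\sum_iw_i=1$. Let $\xi=\{(\boldsymbol{x}_i,w_i)\}\in\Xi$ with $\Phi(\xi)<\infty$, and let $\mathcal{X}_1=\{\boldsymbol{x}_i:w_i=0\}$, $\mathcal{X}_3=\{\boldsymbol{x}_i:w_i=1/n\}$, $\mathcal{X}_2=\{\boldsymbol{x}_i:0<w_i<1/n\}$. Assume that if $\mathcal{X}_2\ne\emptyset$ then $F_\Phi(\xi;\boldsymbol{x}_i)=s$ for a common value $s$ for all $\boldsymbol{x}_i\in\mathcal{X}_2$. Let $\boldsymbol{x}_{1*}\in\arg\min_{\boldsymbol{x}_i\in\mathcal{X}_1}F_\Phi(\xi;\boldsymbol{x}_i)$ and $\boldsymbol{x}_{3*}\in\arg\max_{\boldsymbol{x}_i\in\mathcal{X}_3}F_\Phi(\xi;\boldsymbol{x}_i)$ (when the respective sets are nonempty). Suppose there exist $\xi_0\in\Xi$ and $\delta>0$ with $\Phi(\xi)-\Phi(\xi_0)>\delta$. Then: (a) if $\mathcal{X}_2=\emptyset$, then $F_\Phi(\xi;\boldsymbol{x}_{1*})-F_\Phi(\xi;\boldsymbol{x}_{3*})\le-\delta$; (b) if $\mathcal{X}_2\ne\emptyset$ and $\mathcal{X}_1=\emptyset$, then $\mathcal{X}_3\neq\emptyset$ and $F_\Phi(\xi;\boldsymbol{x}_{3*})-s\ge\delta$; (c) if $\mathcal{X}_2\ne\emptyset$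 and $\mathcal{X}_3=\emptyset$, then $\mathcal{X}_1\neq\emptyset$ and $F_\Phi(\xi;\boldsymbol{x}_{1*})-s\le-\delta$; (d) if $\mathcal{X}_1,\mathcal{X}_2,\mathcal{X}_3$ are all nonempty, then $F_\Phi(\xi;\boldsymbol{x}_{1*})-s\le-\delta/2$ or $F_\Phi(\xi;\boldsymbol{x}_{3*})-s\ge\delta/2$.
   Context: Designs $\xi=\{(\boldsymbol{x}_i,w_i)\}$ on $\mathcal{X}=\{\boldsymbol{x}_1,\ldots,\boldsymbol{x}_N\}$, $w_i\ge0$, $\sum w_i=1$; $M(\xi)=\sum_iw_iI_{\boldsymbol\theta}(\boldsymbol{x}_i)$ with symmetric PSD $I_{\boldsymbol\theta}(\boldsymbol{x}_i)$; $\Phi(\xi)$ is a criterion of $M(\xi)$ ($+\infty$ when undefined). $F_\Phi(\xi,\eta)=\lim_{\alpha\downarrow0}[\Phi((1-\alpha)\xi+\alpha\eta)-\Phi(\xi)]/\alpha$; $F_\Phi(\xi;\boldsymbol{x}_i)=F_\Phi(\xi,\delta_{\boldsymbol{x}_i})$ with $\delta_{\boldsymbol{x}_i}$ the one-point design at $\boldsymbol{x}_i$. $\Lambda$: criteria convex in the weights, linearly differentiable ($F_\Phi(\xi,\eta)=\sum_i\lambda_iF_\Phi(\xi;\boldsymbol{x}_i)$ for $\eta=\{(\boldsymbol{x}_i,\lambda_i)\}$ whenever $\Phi(\xi)<\infty$), and infinitely differentiable along line segments of designs. *)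

(* Defs.v *)
From HB Require Import structures.
From mathcomp Require Import all_boot all_order all_algebra.
From mathcomp Require Import all_classical all_reals all_analysis.
Set Implicit Arguments. Unset Strict Implicit. Unset Printing Implicit Defensive.
Import Order.TTheory GRing.Theory Num.Theory.
Import numFieldNormedType.Exports.
Local Open Scope classical_set_scope.
Local Open Scope ring_scope.

Section Designs.
Variables (R : realType) (N : nat).

(* A design on X = {x_1,...,x_N} is identified with its weight vector. *)
Definition is_design (w : 'I_N -> R) : Prop :=
  (forall i, 0 <= w i) /\ \sum_(i < N) w i = 1.

Definition is_bdesign (n : nat) (w : 'I_N -> R) : Prop :=
  is_design w /\ (forall i, w i <= n%:R^-1).

Definition seg (w v : 'I_N -> R) (a : R) : 'I_N -> R :=
  fun i => (1 - a) * w i + a * v i.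

Definition dirac_design (i : 'I_N) : 'I_N -> R := fun j => (j == i)%:R.

Definition infmx (p : nat) (I : 'I_N -> 'M[R]_p) (w : 'I_N -> R) : 'M[R]_p :=
  \sum_(i < N) w i *: I i.

Definition symPSD (p : nat) (A : 'M[R]_p) : Prop :=
  A^T = A /\ forall v : 'cV[R]_p, 0 <= (v^T *m A *m v) 0 0.

Definition crit (p : nat) (I : 'I_N -> 'M[R]_p) (phi : 'M[R]_p -> \bar R)
  (w : 'I_N -> R) : \bar R := phi (infmx I w).

Definition dquot (Phi : ('I_N -> R) -> \bar R) (w v : 'I_N -> R) (a : R) : \bar R :=
  ((Phi (seg w v a) - Phi w) * (a^-1)%:E)%E.

Definition Fdir (Phi : ('I_N -> R) -> \bar R) (w v : 'I_N -> R) : R :=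
  fine (lim (dquot Phi w v @ at_right 0)).

Definition Fpt (Phi : ('I_N -> R) -> \bar R) (w : 'I_N -> R) (i : 'I_N) : R :=
  Fdir Phi w (dirac_design i).

Definition in_Lambda (Phi : ('I_N -> R) -> \bar R) : Prop :=
  (forall w, is_design w -> Phi w != -oo%E) /\
  (forall w v a, is_design w -> is_design v -> 0 <= a <= 1 ->
     (Phi (seg w v a) <= (1 - a)%:E * Phi w + a%:E * Phi v)%E) /\
  (forall w v, is_design w -> is_design v -> (Phi w < +oo)%E ->
     dquot Phi w v @ at_right 0 --> (\sum_(i < N) v i * Fpt Phi w i)%:E) /\
  (forall w v (a0 : R), is_design w -> is_design v -> 0 < a0 < 1 ->
     (\forall a \near a0, (Phi (seg w v a) < +oo)%E) ->
     forall k : nat,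
       derivable (derive1n k (fun a => fine (Phi (seg w v a)))) a0 1).

End Designs.

(* Main.v *)
Require Import Defs.
From HB Require Import structures.
From mathcomp Require Import all_boot all_order all_algebra.
From mathcomp Require Import all_classical all_reals all_analysis.
From mathcomp Require Import ring lra.
Import Order.TTheory GRing.Theory Num.Theory.
Import numFieldNormedType.Exports.
Local Open Scope ring_scope.

Lemma seg_design (R : realType) N (w v : 'I_N -> R) a :
  is_design w -> is_design v -> 0 <= a <= 1 -> is_design (seg w v a).
Proof.
move=> [w0 w1] [v0 v1] /andP[a0 a1]; split.
  by move=> i; rewrite /seg addr_ge0 // mulr_ge0 // subr_ge0.
rewrite /seg big_split /= -!mulr_sumr w1 v1; ring.
Qed.

Lemma key_ineq (R : realType) N (Phi : ('I_N -> R) -> \bar R)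
  (HLam : in_Lambda Phi) (w w0 : 'I_N -> R) (Hw : is_design w) (Hw0 : is_design w0)
  (Hfin : (Phi w < +oo)%E) (delta : R)
  (Hgap : (Phi w - Phi w0 > delta%:E)%E) :
  \sum_i (w0 i - w i) * Fpt Phi w i < - delta.
Proof.
have [Hnoo [Hconv [Hder _]]] := HLam.
have Hw1 := Hnoo _ Hw; have Hw01 := Hnoo _ Hw0.
have [pw Ew] : exists pw, Phi w = pw%:E.
  by move: Hfin Hw1; case: (Phi w) => [pw| |] //; exists pw.
have [p0 Ew0] : exists p0, Phi w0 = p0%:E.
  by move: Hgap Hw01; rewrite Ew; case: (Phi w0) => [p0| |] //; exists p0.
move: Hgap; rewrite Ew Ew0 -EFinB lte_fin => Hgap.
have L0 : \sum_i w i * Fpt Phi w i = 0.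
  have H := Hder w w Hw Hw (ltac:(by rewrite Ew ltey)).
  have E : dquot Phi w w = fun _ => 0%E.
    apply: funext => a; rewrite /dquot.
    have -> : seg w w a = w by apply: funext => i; rewrite /seg; ring.
    by rewrite Ew /= subee // mul0e.
  rewrite E in H.
  have H2 : ((fun=> 0%E) @ (0%R:R)^'+ --> (0%E : \bar R))%classic by apply: cvg_cst.
  have E3 := cvg_unique (@ereal_hausdorff R) H H2.
  by apply: EFin_inj; rewrite E3.
have L1 : \sum_i w0 i * Fpt Phi w i <= p0 - pw.
  have H := Hder w w0 Hw Hw0 (ltac:(by rewrite Ew ltey)).
  have : (lim (dquot Phi w w0 @ (0%R:R)^'+)%classic <= (p0 - pw)%:E)%E.
    apply: lime_le; first by apply/cvg_ex; eexists; exact: H.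
    near=> a.
    have a0 : 0 < a by near: a; exact: nbhs_right_gt.
    have a1 : a < 1 by near: a; exact: nbhs_right_lt.
    have a01 : 0 <= a <= 1 by rewrite !ltW.
    have Hc := Hconv w w0 a Hw Hw0 a01.
    have Hs := Hnoo _ (@seg_design R N w w0 a Hw Hw0 a01).
    rewrite /dquot; move: Hc Hs; rewrite Ew Ew0.
    case: (Phi (seg w w0 a)) => [r| |] //=.
    rewrite -?EFinM -?EFinD -?EFinM !lee_fin => Hr _.
    rewrite ler_pdivrMr // lerBlDl.
    by rewrite (_ : pw + (p0 - pw) * a = (1 - a) * pw + a * p0) //; ring.
  by rewrite (cvg_lim (@ereal_hausdorff R) H) lee_fin.
have -> : \sum_i (w0 i - w i) * Fpt Phi w i =
   \sum_i w0 i * Fpt Phi w i - \sum_i w i * Fpt Phi w i.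
  by rewrite -sumrB; apply: eq_bigr => i _; ring.
rewrite L0 subr0; lra.
Unshelve. all: by end_near.
Qed.

Section Comb.
Variables (R : realType) (N n : nat) (w w0 : 'I_N -> R).
Hypotheses (Hn0 : (0 < n)%N) (Hw : is_bdesign n w) (Hw0 : is_bdesign n w0).

Definition D1 := \sum_i (w i == 0)%:R * (w0 i - w i).
Definition D3 := \sum_i (w i == n%:R^-1)%:R * (w0 i - w i).

Lemma ninv_gt0 : 0 < n%:R^-1 :> R.
Proof. by rewrite invr_gt0 ltr0n. Qed.

Lemma D1_bounds : 0 <= D1 <= 1.
Proof.
have [[wp w1] wb] := Hw; have [[vp v1] vb] := Hw0.
apply/andP; split.
  apply: sumr_ge0 => i _; case: eqP => [->|_]; rewrite ?mul0r //.
  by rewrite mul1r subr0.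
rewrite -v1; apply: ler_sum => i _; case: eqP => [->|_].
  by rewrite mul1r subr0.
by rewrite mul0r.
Qed.

Lemma D3_bounds : -1 <= D3 <= 0.
Proof.
have [[wp w1] wb] := Hw; have [[vp v1] vb] := Hw0.
apply/andP; split.
  rewrite -w1 -sumrN; apply: ler_sum => i _; case: eqP => [E|_].
    by rewrite mul1r; have := vp i; lra.
  by rewrite mul0r oppr_le0.
apply: sumr_le0 => i _; case: eqP => [E|_]; rewrite ?mul0r //.
by rewrite mul1r subr_le0 E.
Qed.

Lemma D1_0 : (forall i, w i <> 0) -> D1 = 0.
Proof.
move=> H; apply: big1 => i _; case: eqP => [/H //|_]; by rewrite mul0r.
Qed.

Lemma D3_0 : (forall i, w i <> n%:R^-1) -> D3 = 0.
Proof.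
move=> H; apply: big1 => i _; case: eqP => [/H //|_]; by rewrite mul0r.
Qed.

Lemma comb (F : 'I_N -> R) (c a b delta : R) :
  \sum_i (w0 i - w i) * F i < - delta ->
  (forall i, w i = 0 -> a <= F i - c) ->
  (forall i, w i = n%:R^-1 -> F i - c <= b) ->
  (forall i, 0 < w i < n%:R^-1 -> F i = c) ->
  a * D1 + b * D3 < - delta.
Proof.
have [[wp w1] wb] := Hw; have [[vp v1] vb] := Hw0.
have ni := ninv_gt0.
move=> Hk H1 H3 H2.
have Ek : \sum_i (w0 i - w i) * F i = \sum_i (w0 i - w i) * (F i - c).
  have -> : \sum_i (w0 i - w i) * (F i - c) =
     \sum_i (w0 i - w i) * F i - c * (\sum_i w0 i - \sum_i w i).
    rewrite -sumrB mulr_sumr -sumrB; apply: eq_bigr => i _; ring.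
  by rewrite v1 w1 subrr mulr0 subr0.
rewrite Ek in Hk.
move: Hk; apply: le_lt_trans.
rewrite /D1 /D3 !mulr_sumr -big_split /=; apply: ler_sum => i _.
have wpi := wp i; have wbi := wb i; have vpi := vp i; have vbi := vb i.
case: eqP => [E|NE].
  have -> : (w i == n%:R^-1) = false by apply/negbTE; rewrite E eq_sym lt0r_neq0.
  have := H1 i E; rewrite E /= mul1r mul0r subr0 mulr0 addr0 mulrC.
  exact: ler_wpM2l.
case: eqP => [E|NE3].
  have := H3 i E; rewrite E /= mul1r mul0r mulr0 add0r mulrC.
  by move=> h; apply: ler_wnM2l => //; rewrite subr_le0.
have : 0 < w i < n%:R^-1.
  have h1 : w i != 0 by apply/eqP.
  have h3 : w i != n%:R^-1 by apply/eqP.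
  by rewrite !lt_def h1 wpi wbi eq_sym h3.
move/H2=> ->; by rewrite subrr /= !mul0r !mulr0 addr0.
Qed.

End Comb.

Lemma La (R : realType) (a D d : R) :
  a * D < - d -> 0 <= D <= 1 -> 0 < d -> a <= - d.
Proof.
move=> H /andP[D0 D1] d0.
case: (lerP a (- d)) => // h; exfalso.
have h1 : 0 <= a * D + d * D by rewrite -mulrDl; apply: mulr_ge0 => //; lra.
have h2 : 0 <= d - d * D.
  by rewrite -{1}(mulr1 d) -mulrBr; apply: mulr_ge0; lra.
lra.
Qed.

Lemma Lb (R : realType) (b D d : R) :
  b * D < - d -> -1 <= D <= 0 -> 0 < d -> d <= b.
Proof.
move=> H /andP[D0 D1] d0.
have := @La R (- b) (- D) d; rewrite mulrNN => /(_ H).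
have : 0 <= - D <= 1 by apply/andP; split; lra.
move=> h /(_ h d0); lra.
Qed.

Lemma Ld (R : realType) (a b D E d : R) :
  a * D + b * E < - d -> 0 <= D <= 1 -> -1 <= E <= 0 -> 0 < d ->
  a <= - (d / 2) \/ d / 2 <= b.
Proof.
move=> H /andP[D0 D1] /andP[E0 E1] d0.
case: (lerP a (- (d / 2))) => [h|h]; first by left.
case: (lerP (d / 2) b) => [h'|h']; first by right.
exfalso.
have h1 : 0 <= a * D + d / 2 * D by rewrite -mulrDl; apply: mulr_ge0 => //; lra.
have h2 : 0 <= d / 2 - d / 2 * D.
  rewrite -{1}(mulr1 (d / 2)) -mulrBr; apply: mulr_ge0; lra.
have h3 : 0 <= b * E - d / 2 * E.
  by rewrite -mulrBl; apply: mulr_le0; lra.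
have h4 : 0 <= d / 2 + d / 2 * E.
  rewrite -{1}(mulr1 (d / 2)) -mulrDr; apply: mulr_ge0; lra.
lra.
Qed.

Theorem lemma2 (R : realType) (p N n : nat)
  (I : 'I_N -> 'M[R]_p) (HI : forall i, symPSD (I i))
  (phi : 'M[R]_p -> \bar R)
  (HLam : in_Lambda (crit I phi))
  (Hn0 : (0 < n)%N) (HnN : (n < N)%N)
  (w : 'I_N -> R) (Hw : is_bdesign n w)
  (Hfin : (crit I phi w < +oo)%E)
  (s : R)
  (Hs : forall i, 0 < w i < n%:R^-1 -> Fpt (crit I phi) w i = s)
  (w0 : 'I_N -> R) (Hw0 : is_bdesign n w0)
  (delta : R) (Hdelta : 0 < delta)
  (Hgap : (crit I phi w - crit I phi w0 > delta%:E)%E) :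
  let F := Fpt (crit I phi) w in
  let X1 := fun i => w i = 0 in
  let X2 := fun i => 0 < w i < n%:R^-1 in
  let X3 := fun i => w i = n%:R^-1 in
  let argmin1 := fun i => X1 i /\ forall j, X1 j -> F i <= F j in
  let argmax3 := fun i => X3 i /\ forall j, X3 j -> F j <= F i in
  [/\ (* (a) *)
      (forall i, ~ X2 i) ->
        forall i1 i3, argmin1 i1 -> argmax3 i3 -> F i1 - F i3 <= - delta,
      (* (b) *)
      (exists i, X2 i) -> (forall i, ~ X1 i) ->
        (exists i, X3 i) /\ (forall i3, argmax3 i3 -> F i3 - s >= delta),
      (* (c) *)
      (exists i, X2 i) -> (forall i, ~ X3 i) ->
        (exists i, X1 i) /\ (forall i1, argmin1 i1 -> F i1 - s <= - delta)
    & (* (d) *)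
      (exists i, X1 i) -> (exists i, X2 i) -> (exists i, X3 i) ->
        forall i1 i3, argmin1 i1 -> argmax3 i3 ->
          F i1 - s <= - (delta / 2) \/ F i3 - s >= delta / 2].
Proof.
move=> F X1 X2 X3 argmin1 argmax3.
have Hk : \sum_i (w0 i - w i) * F i < - delta.
  have := @key_ineq R N (crit I phi) HLam w w0 (proj1 Hw) (proj1 Hw0) Hfin delta Hgap.
  by rewrite /F.
have CB := @comb R N n w w0 Hn0 Hw Hw0 F _ _ _ delta Hk.
have /andP[D10 D11] := @D1_bounds R N n w w0 Hw Hw0.
have /andP[D30 D31] := @D3_bounds R N n w w0 Hw Hw0.
set D1v := D1 R N w w0 in CB D10 D11.
set D3v := D3 R N n w w0 in CB D30 D31.
have ni : 0 < n%:R^-1 :> R by exact: ninv_gt0.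
split.
- move=> N2 i1 i3 [X1i1 m1] [X3i3 m3].
  have H := CB (F i3) (F i1 - F i3) 0.
  have : (F i1 - F i3) * D1v + 0 * D3v < - delta.
    apply: H.
    + by move=> j /m1 h; rewrite lerD2r.
    + by move=> j /m3 h; rewrite subr_le0.
    + by move=> j /N2.
  rewrite mul0r addr0 => H'; apply: (@La _ _ _ _ H') => //; exact/andP.
- move=> [i2 X2i2] N1.
  have E1 := @D1_0 R N w w0 N1; rewrite -/D1v in E1.
  have ex3 : exists i, X3 i.
    apply: contrapT => nex.
    have E3 : D3v = 0.
      by apply: D3_0 => i Ei; apply: nex; exists i.
    have := CB s 0 0; rewrite E1 E3 !mul0r addr0.
    move=> H; have : 0 < - delta.
      apply: H => //.
      + by move=> j /N1.
      + by move=> j Ej; exfalso; apply: nex; exists j.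
    rewrite oppr_gt0 => h; by move: (lt_trans h Hdelta); rewrite ltxx.
  split => // i3 [X3i3 m3].
  have : 0 * D1v + (F i3 - s) * D3v < - delta.
    apply: (CB s) => //.
    + by move=> j /N1.
    + by move=> j /m3 h; rewrite lerD2r.
  rewrite mul0r add0r => H'; apply: (@Lb _ _ _ _ H') => //; exact/andP.
- move=> [i2 X2i2] N3.
  have E3 := @D3_0 R N n w w0 N3; rewrite -/D3v in E3.
  have ex1 : exists i, X1 i.
    apply: contrapT => nex.
    have E1 : D1v = 0.
      by apply: D1_0 => i Ei; apply: nex; exists i.
    have := CB s 0 0; rewrite E1 E3 !mul0r addr0.
    move=> H; have : 0 < - delta.
      apply: H => //.
      + by move=> j Ej; exfalso; apply: nex; exists j.
      + by move=> j /N3.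
    rewrite oppr_gt0 => h; by move: (lt_trans h Hdelta); rewrite ltxx.
  split => // i1 [X1i1 m1].
  have : (F i1 - s) * D1v + 0 * D3v < - delta.
    apply: (CB s) => //.
    + by move=> j /m1 h; rewrite lerD2r.
    + by move=> j /N3.
  rewrite mul0r addr0 => H'; apply: (@La _ _ _ _ H') => //; exact/andP.
- move=> _ _ _ i1 i3 [X1i1 m1] [X3i3 m3].
  have : (F i1 - s) * D1v + (F i3 - s) * D3v < - delta.
    apply: (CB s) => //.
    + by move=> j /m1 h; rewrite lerD2r.
    + by move=> j /m3 h; rewrite lerD2r.
  move=> H'; apply: (@Ld _ _ _ _ _ _ H') => //; exact/andP.
Qed.
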